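(* Let $T>K$ be positive integers. Consider the linear model $\mathbf{y}=\mathbf{X}\boldsymbol{\beta}+\mathbf{u}$, where $\mathbf{X}$ is a known non-stochastic real $(T\times K)$ matrix (possibly of rank less than $K$), $\boldsymbol{\beta}\in\mathbb{R}^K$ is unknown and satisfies the linear restrictions $\mathbf{R}\boldsymbol{\beta}=\mathbf{r}$ with known $\mathbf{R}\in\mathbb{R}^{q\times K}$, $\mathbf{r}\in\mathbb{R}^q$, $E(\mathbf{u})=\mathbf{0}$ and $E(\mathbf{u}\mathbf{u}')=\sigma^2\boldsymbol{\Omega}$, where $\sigma^2>0$ is an unknown scalar and $\boldsymbol{\Omega}$ is a known symmetric nonnegative definite $(T\times T)$ matrix with $\mathrm{tr}(\boldsymbol{\Omega})=T$ and rank $M$ (possibly $M<T$). Write $\boldsymbol{\Omega}=\mathbf{F}\boldsymbol{\Lambda}\mathbf{F}'$, where $\mathbf{F}$ is a $(T\times M)$ matrix with orthonormal columns (eigenvectors of $\boldsymbol{\Omega}$ for its positive eigenvalues) and $\boldsymbol{\Lambda}$ is the $(M\times M)$ diagonal matrix of the positive eigenvalues, so that $\boldsymbol{\Omega}^+=\mathbf{F}\boldsymbol{\Lambda}^{-1}\mathbf{F}'$ is the Moore–Penrose inverse of $\boldsymbol{\Omega}$. Let $\mathbf{A}$ be a $(T\times(T-M))$ matrix with orthonormal columns satisfying $\boldsymbol{\Omega}\mathbf{A}=\mathbf{0}$, and let $\mathbf{g}=\mathbf{A}'\mathbf{X}\boldsymbol{\beta}$ (so that $\mathbf{A}'\mathbf{y}=\mathbf{g}$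 with probability one). Define \[ \mathbf{H}=\begin{pmatrix}\mathbf{R}\\ \mathbf{A}'\mathbf{X}\end{pmatrix},\qquad \mathbf{h}=\begin{pmatrix}\mathbf{r}\\ \mathbf{g}\end{pmatrix},\qquad \mathbf{C}_+=\mathbf{X}'\boldsymbol{\Omega}^+\mathbf{X}, \] let $\mathbf{N}$ be a $(K\times(K-\mathrm{rk}(\mathbf{H})))$ matrix whose columns form an orthonormal basis of the null space of $\mathbf{H}$, and let $\mathbf{S}=\mathbf{N}'\mathbf{C}_+\mathbf{N}$. Assume (i) $\mathrm{rk}(\mathbf{R})=\mathrm{rk}(\mathbf{R},\mathbf{r})$; (ii) the stacked matrix $\begin{pmatrix}\mathbf{R}\\ \mathbf{X}\end{pmatrix}$ has full column rank $K$; (iii) $\mathrm{rk}(\mathbf{H})=\mathrm{rk}(\mathbf{H},\mathbf{h})$. Let $\boldsymbol{\beta}^*\in\mathbb{R}^K$ be an arbitrary vector with $\mathbf{H}\boldsymbol{\beta}^*=\mathbf{h}$. Then $\mathbf{S}$ is invertible and the linear system in $\mathbf{b}\in\mathbb{R}^K$ \[ \mathbf{H}\mathbf{b}=\mathbf{h},\qquad \mathbf{N}'\mathbf{C}_+\mathbf{b}=\mathbf{N}'\mathbf{X}'\boldsymbol{\Omega}^+\mathbf{y} \] has the unique solution \[ \hat{\boldsymbol{\beta}}=\mathbf{N}\mathbf{S}^{-1}\mathbf{N}'\mathbf{X}'\boldsymbol{\Omega}^+\mathbf{y}+(\mathbf{I}_K-\mathbf{N}\mathbf{S}^{-1}\mathbf{N}'\mathbf{C}_+)\boldsymbol{\beta}^*,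 \] and, regarding $\hat{\boldsymbol{\beta}}$ as a random vector through $\mathbf{y}$, $E(\hat{\boldsymbol{\beta}})=\boldsymbol{\beta}$ and $\mathrm{Var}(\hat{\boldsymbol{\beta}})=\sigma^2\mathbf{N}\mathbf{S}^{-1}\mathbf{N}'$.
   Context: $\mathrm{rk}$ denotes matrix rank, $(\mathbf{B},\mathbf{b})$ the matrix obtained by appending the column(s) $\mathbf{b}$ to $\mathbf{B}$, and a stacked matrix $\begin{pmatrix}\mathbf{B}_1\\ \mathbf{B}_2\end{pmatrix}$ is formed by placing the rows of $\mathbf{B}_2$ below those of $\mathbf{B}_1$. The restrictions $\mathbf{H}\boldsymbol{\beta}=\mathbf{h}$ combine the explicit restrictions $\mathbf{R}\boldsymbol{\beta}=\mathbf{r}$ with the implicit restrictions $\mathbf{A}'\mathbf{X}\boldsymbol{\beta}=\mathbf{g}$ induced by the singularity of $\boldsymbol{\Omega}$. $\mathrm{Var}$ denotes the covariance matrix. *)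

(* Defs.v *)
From HB Require Import structures.
From mathcomp Require Import all_boot all_order all_algebra.
From mathcomp Require Import all_classical all_reals all_analysis.
Set Implicit Arguments. Unset Strict Implicit. Unset Printing Implicit Defensive.
Import Order.TTheory GRing.Theory Num.Theory.
Local Open Scope ring_scope.

Definition beta_hat (R : realType) (T K p : nat)
  (X : 'M[R]_(T, K)) (Omp : 'M[R]_T) (N : 'M[R]_(K, p)) (bstar : 'cV[R]_K)
  (y : 'cV[R]_T) : 'cV[R]_K :=
  let Cp := X^T *m Omp *m X in
  let S := N^T *m Cp *m N in
  (N *m invmx S *m N^T *m X^T *m Omp *m y
   + (1%:M - N *m invmx S *m N^T *m Cp) *m bstar)%R.

(* Main.v *)
Require Import Defs.
From HB Require Import structures.
From mathcomp Require Import all_boot all_order all_algebra.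
From mathcomp Require Import all_classical all_reals all_analysis.
From mathcomp Require Import ring.
Import Order.TTheory GRing.Theory Num.Theory.
Local Open Scope ring_scope.
Set Implicit Arguments. Unset Strict Implicit.



Lemma FA0 (R : realType) (T M : nat) (F : 'M[R]_(T, M)) (hF : F^T *m F = 1%:M)
  (lam : 'rV[R]_M) (hlam : forall i, 0 < lam 0 i) (Q : nat) (A : 'M[R]_(T, Q))
  (hOmA : F *m diag_mx lam *m F^T *m A = 0) : F^T *m A = 0.
Proof.
have h1 : diag_mx lam *m (F^T *m A) = 0.
  have := congr1 (mulmx F^T) hOmA.
  by rewrite mulmx0 !mulmxA hF mul1mx -mulmxA.
apply/matrixP => i j; have := congr1 (fun B : 'M[R]_(M, Q) => B i j) h1.
rewrite mul_diag_mx !mxE => /eqP; rewrite mulf_eq0 => /orP[|/eqP //].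
by rewrite gt_eqF.
Qed.

Lemma key_inj (R : realType) (T M : nat) (hM : (M <= T)%N) (F : 'M[R]_(T, M))
  (hF : F^T *m F = 1%:M) (A : 'M[R]_(T, T - M)) (hA : A^T *m A = 1%:M)
  (hFA : F^T *m A = 0) (v : 'cV[R]_T) :
  F^T *m v = 0 -> A^T *m v = 0 -> v = 0.
Proof.
move=> h1 h2.
pose Q := row_mx F A.
have hQ : Q^T *m Q = 1%:M.
  rewrite /Q tr_row_mx mul_col_row hF hA hFA.
  have -> : A^T *m F = 0 by rewrite -(trmxK (A^T *m F)) trmx_mul trmxK hFA trmx0.
  by rewrite [RHS]scalar_mx_block.
have hr : row_free Q.
  rewrite /row_free eqn_leq rank_leq_row /=.
  have := mulmx1_min_rank (M := Q^T) (A := Q) (N := 1%:M).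
  rewrite mulmx1 => /(_ hQ) h; apply: leq_trans h; by rewrite subnKC.
have : v^T *m Q = 0.
  have e1 : v^T *m F = 0 by rewrite -(trmxK (v^T *m F)) trmx_mul trmxK h1 trmx0.
  have e2 : v^T *m A = 0 by rewrite -(trmxK (v^T *m A)) trmx_mul trmxK h2 trmx0.
  by rewrite /Q mul_mx_row e1 e2 row_mx0.
rewrite -(mul0mx _ Q) => /(row_free_inj hr) /(congr1 trmx).
by rewrite trmxK trmx0.
Qed.

Lemma invmx_diag (R : realType) (M : nat) (lam : 'rV[R]_M)
  (hlam : forall i, 0 < lam 0 i) :
  invmx (diag_mx lam) = diag_mx (\row_i (lam 0 i)^-1).
Proof.
have h : diag_mx lam *m diag_mx (\row_i (lam 0 i)^-1) = 1%:M.
  rewrite mulmx_diag; apply/matrixP => i j; rewrite !mxE.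
  case: (i == j); rewrite ?mulr1n ?mulr0n //.
  by rewrite mulfV // gt_eqF.
have [u _] := mulmx1_unit h.
by rewrite -[RHS]mul1mx -(mulVmx u) -mulmxA h mulmx1.
Qed.

Lemma diag_unit (R : realType) (M : nat) (lam : 'rV[R]_M)
  (hlam : forall i, 0 < lam 0 i) : diag_mx lam \in unitmx.
Proof.
have h : diag_mx lam *m diag_mx (\row_i (lam 0 i)^-1) = 1%:M.
  rewrite mulmx_diag; apply/matrixP => i j; rewrite !mxE.
  case: (i == j); rewrite ?mulr1n ?mulr0n //.
  by rewrite mulfV // gt_eqF.
by have [u _] := mulmx1_unit h.
Qed.

Lemma quad_diag (R : realType) (M : nat) (lam : 'rV[R]_M)
  (hlam : forall i, 0 < lam 0 i) (x : 'cV[R]_M) :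
  (x^T *m diag_mx (\row_i (lam 0 i)^-1) *m x) 0 0 = 0 -> x = 0.
Proof.
rewrite -mulmxA mxE => h.
have hs : forall j, true -> 0 <= x^T 0 j * (diag_mx (\row_i (lam 0 i)^-1) *m x) j 0.
  move=> j _; rewrite mul_diag_mx !mxE mulrCA.
  by apply: mulr_ge0; [rewrite invr_ge0 ltW | rewrite -expr2 sqr_ge0].
apply/matrixP => j k; rewrite (ord1 k) mxE.
have := psumr_eq0P hs h (i := j) erefl.
rewrite mul_diag_mx !mxE mulrCA => /eqP.
by rewrite mulf_eq0 invr_eq0 gt_eqF //= -expr2 sqrf_eq0 => /eqP.
Qed.

Lemma S_unit (R : realType) (T K q M p : nat) (X : 'M[R]_(T, K))
  (Rm : 'M[R]_(q, K)) (F : 'M[R]_(T, M)) (lam : 'rV[R]_M)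
  (A : 'M[R]_(T, T - M)) (N : 'M[R]_(K, p))
  (hM : (M <= T)%N) (hF : F^T *m F = 1%:M) (hlam : forall i, 0 < lam 0 i)
  (hA : A^T *m A = 1%:M) (hFA : F^T *m A = 0) (hN : N^T *m N = 1%:M)
  (hNH : forall w : 'cV[R]_p, col_mx Rm (A^T *m X) *m (N *m w) = 0)
  (hii : \rank (col_mx Rm X) = K) :
  N^T *m (X^T *m (F *m invmx (diag_mx lam) *m F^T) *m X) *m N \in unitmx.
Proof.
rewrite invmx_diag //.
set D := diag_mx _.
set S := N^T *m _ *m N.
have Ssym : S^T = S by rewrite /S /D !trmx_mul !trmxK tr_diag_mx !mulmxA.
rewrite -row_free_unit; apply: inj_row_free => w hw.
set z := w^T.
have hz : S *m z = 0 by rewrite -Ssym /z -trmx_mul hw trmx0.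
have hq : z^T *m S *m z = 0 by rewrite -mulmxA hz mulmx0.
set x := F^T *m X *m N *m z.
have hx : x = 0.
  apply: (quad_diag hlam); move: hq.
  have -> : x^T *m D *m x = z^T *m S *m z.
    by rewrite /x /S !trmx_mul !trmxK !mulmxA.
  by move=> ->; rewrite mxE.
have hA0 : A^T *m (X *m (N *m z)) = 0.
  have := hNH z; rewrite mul_col_mx -(col_mx0 _ q (T - M)) => /eq_col_mx [_].
  by rewrite !mulmxA.
have hF0 : F^T *m (X *m (N *m z)) = 0 by rewrite !mulmxA.
have hXN := key_inj hM hF hA hFA hF0 hA0.
have hRN : Rm *m (N *m z) = 0.
  have := hNH z; rewrite mul_col_mx -(col_mx0 _ q (T - M)) => /eq_col_mx [-> _] //.
have hB : col_mx Rm X *m (N *m z) = 0 by rewrite mul_col_mx hRN hXN col_mx0.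
have rf : row_free (col_mx Rm X)^T by rewrite /row_free mxrank_tr hii.
have hNz : N *m z = 0.
  have : (N *m z)^T *m (col_mx Rm X)^T = 0 *m (col_mx Rm X)^T.
    by rewrite -trmx_mul hB trmx0 mul0mx.
  by move/(row_free_inj rf)/(congr1 trmx); rewrite trmxK trmx0.
have : z = 0 by rewrite -[z]mul1mx -hN -mulmxA hNz mulmx0.
by move/(congr1 trmx); rewrite /z trmxK trmx0.
Qed.

Section Prob.
Variables (R : realType) (d : measure_display) (Ws : measurableType d)
  (P : probability Ws R) (T : nat) (u : 'I_T -> {RV P >-> R})
  (hu2 : forall i, (u i : Ws -> R) \in Lfun P 2).

Lemma lin_L2 (s : seq 'I_T) (a : 'I_T -> R) :
  (fun w => \sum_(i <- s) a i * u i w) \in Lfun P 2%:E.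
Proof.
elim: s => [|i s IH].
  have -> : (fun w : Ws => \sum_(i <- [::]) a i * u i w) = cst 0.
    by apply: funext => w; rewrite big_nil.
  exact: Lfun_cst.
have -> : (fun w : Ws => \sum_(j <- i :: s) a j * u j w)
   = (a i \o* (u i : Ws -> R) \+ (fun w => \sum_(j <- s) a j * u j w))%R.
  by apply: funext => w; rewrite big_cons; congr (_ + _); exact: mulrC.
have p1 : (1 <= 2%:E :> \bar R)%E by rewrite lee_fin ler1n.
have [_ hadd] := Lfun_addr_closed P p1.
by apply: hadd => //; apply: Lfun_scale => //; rewrite ler1n.
Qed.

Lemma lin_E (s : seq 'I_T) (a : 'I_T -> R) (hEu : forall i, ('E_P[u i] = 0)%E) :
  ('E_P[fun w => (\sum_(i <- s) a i * u i w)%R] = 0)%E.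
Proof.
have Pfin : P setT \is a fin_num := fin_num_measure P _ measurableT.
elim: s => [|i s IH].
  have -> : (fun w : Ws => \sum_(i <- [::]) a i * u i w) = cst 0.
    by apply: funext => w; rewrite big_nil.
  exact: expectation_cst.
have -> : (fun w : Ws => \sum_(j <- i :: s) a j * u j w)
   = (a i \o* (u i : Ws -> R) \+ (fun w => \sum_(j <- s) a j * u j w))%R.
  by apply: funext => w; rewrite big_cons; congr (_ + _); exact: mulrC.
rewrite expectationD; last 2 first.
- by apply: (Lfun_subset12 Pfin); apply: Lfun_scale => //; rewrite ler1n.
- exact: (Lfun_subset12 Pfin (lin_L2 _ _)).
rewrite IH expectationZl; last exact: (Lfun_subset12 Pfin).
by rewrite hEu mule0 adde0.
Qed.

Lemma lin_cov (s : seq 'I_T) (a : 'I_T -> R) (Y : Ws -> R) (g : 'I_T -> R)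
  (hY : Y \in Lfun P 2%:E) (hg : forall i, covariance P (u i) Y = (g i)%:E) :
  covariance P (fun w => \sum_(i <- s) a i * u i w) Y = (\sum_(i <- s) a i * g i)%:E.
Proof.
have Pfin : P setT \is a fin_num := fin_num_measure P _ measurableT.
elim: s => [|i s IH].
  have -> : (fun w : Ws => \sum_(i <- [::]) a i * u i w) = cst 0.
    by apply: funext => w; rewrite big_nil.
  by rewrite covariance_cst_l big_nil.
have -> : (fun w : Ws => \sum_(j <- i :: s) a j * u j w)
   = (a i \o* (u i : Ws -> R) \+ (fun w => \sum_(j <- s) a j * u j w))%R.
  by apply: funext => w; rewrite big_cons; congr (_ + _); exact: mulrC.
rewrite covarianceDl //; last 2 first.
- by apply: Lfun_scale => //; rewrite ler1n.
- exact: lin_L2.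
rewrite IH covarianceZl; last 3 first.
- exact: (Lfun_subset12 Pfin).
- exact: (Lfun_subset12 Pfin).
- exact: Lfun2_mul_Lfun1.
by rewrite hg big_cons EFinD EFinM.
Qed.

Lemma cst_cov (c : R) (X Y : Ws -> R) (hX : X \in Lfun P 2%:E) (hY : Y \in Lfun P 2%:E) :
  covariance P (fun w => c + X w) Y = covariance P X Y.
Proof.
have -> : (fun w => c + X w) = (cst c \+ X)%R by [].
by rewrite covarianceDl ?covariance_cst_l ?add0e //; exact: Lfun_cst.
Qed.

Lemma cst_L2 (c : R) (X : Ws -> R) (hX : X \in Lfun P 2%:E) :
  (fun w => c + X w) \in Lfun P 2%:E.
Proof.
have p1 : (1 <= 2%:E :> \bar R)%E by rewrite lee_fin ler1n.
have [_ hadd] := Lfun_addr_closed P p1.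
have -> : (fun w => c + X w) = (cst c \+ X)%R by [].
by apply: hadd => //; exact: Lfun_cst.
Qed.

Lemma cst_E (c : R) (X : Ws -> R) (hX : X \in Lfun P 2%:E) :
  ('E_P[fun w => (c + X w)%R] = c%:E + 'E_P[X])%E.
Proof.
have Pfin : P setT \is a fin_num := fin_num_measure P _ measurableT.
have -> : (fun w => c + X w) = (cst c \+ X)%R by [].
rewrite expectationD ?expectation_cst //; last exact: (Lfun_subset12 Pfin).
exact: Lfun_cst.
Qed.
End Prob.

Unset Implicit Arguments. Set Strict Implicit.

Theorem theorem3
  (R : realType) (d : measure_display) (Ws : measurableType d)
  (P : probability Ws R)
  (T K q M : nat) (hK : (0 < K)%N) (hTK : (K < T)%N)
  (X : 'M[R]_(T, K)) (beta : 'cV[R]_K)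
  (Rm : 'M[R]_(q, K)) (r : 'cV[R]_q) (hRb : Rm *m beta = r)
  (sigma2 : R) (hsigma : 0 < sigma2)
  (Om : 'M[R]_T) (hOmsym : Om^T = Om)
  (hOmpsd : forall v : 'cV[R]_T, 0 <= (v^T *m Om *m v) 0 0)
  (hOmtr : \tr Om = T%:R) (hOmrk : \rank Om = M)
  (F : 'M[R]_(T, M)) (hF : F^T *m F = 1%:M)
  (lam : 'rV[R]_M) (hlam : forall i, 0 < lam 0 i)
  (hOmF : Om = F *m diag_mx lam *m F^T)
  (A : 'M[R]_(T, T - M)) (hA : A^T *m A = 1%:M) (hOmA : Om *m A = 0)
  (N : 'M[R]_(K, K - \rank (col_mx Rm (A^T *m X))))
  (hN : N^T *m N = 1%:M)
  (hNnull : forall v : 'cV[R]_K,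
      col_mx Rm (A^T *m X) *m v = 0 <-> exists w, v = N *m w)
  (hi : \rank Rm = \rank (row_mx Rm r))
  (hii : \rank (col_mx Rm X) = K)
  (hiii : \rank (col_mx Rm (A^T *m X))
          = \rank (row_mx (col_mx Rm (A^T *m X)) (col_mx r (A^T *m X *m beta))))
  (bstar : 'cV[R]_K)
  (hbstar : col_mx Rm (A^T *m X) *m bstar = col_mx r (A^T *m X *m beta))
  (u : 'I_T -> {RV P >-> R})
  (hu2 : forall i, (u i : Ws -> R) \in Lfun P 2)
  (hEu : forall i, ('E_P[u i] = 0)%E)
  (hVu : forall i j, covariance P (u i) (u j) = (sigma2 * Om i j)%:E) :
  let Omp := F *m invmx (diag_mx lam) *m F^T in
  let Cp := X^T *m Omp *m X in
  let S := N^T *m Cp *m N in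
  let H := col_mx Rm (A^T *m X) in
  let h := col_mx r (A^T *m X *m beta) in
  let y := fun w : Ws => X *m beta + \col_i u i w in
  S \in unitmx
  /\ (forall (yv : 'cV[R]_T) (b : 'cV[R]_K),
        (H *m b = h /\ N^T *m Cp *m b = N^T *m X^T *m Omp *m yv)
        <-> b = beta_hat X Omp N bstar yv)
  /\ (forall k : 'I_K,
        ('E_P[fun w => beta_hat X Omp N bstar (y w) k ord0] = (beta k ord0)%:E)%E)
  /\ (forall k l : 'I_K,
        covariance P (fun w => beta_hat X Omp N bstar (y w) k ord0)
                     (fun w => beta_hat X Omp N bstar (y w) l ord0)
        = (sigma2 * (N *m invmx S *m N^T) k l)%:E).
Proof.
move=> Omp Cp S H h y.
have hM : (M <= T)%N by rewrite -hOmrk rank_leq_row.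
have hFA : F^T *m A = 0 by apply: (FA0 hF hlam); rewrite -hOmF.
have HN : forall w : 'cV_(K - \rank H), H *m (N *m w) = 0.
  by move=> w; apply/hNnull; exists w.
have Su : S \in unitmx by exact: (S_unit hM hF hlam hA hFA hN HN hii).
set iS := invmx S.
have SiS : S *m iS = 1%:M by exact: mulmxV.
have iSS : iS *m S = 1%:M by exact: mulVmx.
have Hbeta : H *m beta = h by rewrite /H /h mul_col_mx hRb.
have HNeq : forall v : 'cV[R]_K, H *m v = 0 -> exists w, v = N *m w.
  by move=> v; case: (hNnull v).
set Gt := N^T *m X^T *m Omp.
set Gm := N *m iS *m Gt.
set c := N^T *m Cp *m bstar.
have bh : forall yv, beta_hat X Omp N bstar yv
    = bstar + N *m (iS *m (Gt *m yv - c)).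
  move=> yv; rewrite /beta_hat -/Cp -/S -/iS mulmxBl mul1mx.
  rewrite (mulmxBr iS) (mulmxBr N) addrCA; congr (_ + (_ - _)).
    by rewrite /Gt !mulmxA.
  by rewrite /c !mulmxA.
have [w0 hw0] : exists w, bstar - beta = N *m w.
  by apply: HNeq; rewrite mulmxBr Hbeta; move: hbstar; rewrite -/H -/h => ->; rewrite subrr.
have eb : bstar = beta + N *m w0 by rewrite -hw0 addrC subrK.
have ec : c = N^T *m Cp *m beta + S *m w0 by rewrite /c eb mulmxDr /S !mulmxA.
have key : forall yv, beta_hat X Omp N bstar yv = beta + Gm *m (yv - X *m beta).
  move=> yv.
  have eG : Gm *m (yv - X *m beta) = N *m (iS *m (Gt *m yv - N^T *m Cp *m beta)).
    by rewrite /Gm /Gt /Cp !mulmxBr !mulmxA.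
  rewrite bh ec eG opprD addrA (mulmxBr iS _ (S *m w0)) (mulmxA iS S w0) iSS mul1mx.
  rewrite (mulmxBr N) eb -addrA; congr (_ + _); by rewrite addrC subrK.
split; first exact: Su.
split.
  move=> yv b; split.
    case=> hb hn.
    have [w hw] : exists w, b - bstar = N *m w.
      by apply: HNeq; rewrite mulmxBr hb; move: hbstar; rewrite -/H -/h => ->; rewrite subrr.
    have eb2 : b = bstar + N *m w by rewrite -hw addrC subrK.
    have e : c + S *m w = Gt *m yv by rewrite /Gt -hn eb2 mulmxDr /c /S !mulmxA.
    have ew : w = iS *m (Gt *m yv - c).
      by rewrite -e addrC addKr mulmxA iSS mul1mx.
    by rewrite bh eb2 ew.
  move=> ->; rewrite bh; split.
    by rewrite mulmxDr HN; move: hbstar; rewrite -/H -/h => ->; rewrite addr0.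
  rewrite mulmxDr -/c mulmxA -/S (mulmxA S iS) SiS mul1mx addrC subrK.
  by [].
have ef : forall k, (fun w => beta_hat X Omp N bstar (y w) k ord0)
    = (fun w => beta k ord0 + \sum_(i <- index_enum 'I_T) Gm k i * u i w).
  move=> k; apply: funext => w.
  rewrite key /y [X *m beta + _]addrC addrK mxE [Z in _ + Z]mxE.
  congr (_ + _); apply: eq_bigr => i _; congr (_ * _); by rewrite mxE.
split.
  move=> k; rewrite ef cst_E; last exact: lin_L2.
  by rewrite lin_E // adde0.
move=> k l; rewrite !ef.
rewrite cst_cov; [|exact: lin_L2|exact: cst_L2 (lin_L2 _ _ _)].
rewrite covarianceC cst_cov; [|exact: lin_L2|exact: lin_L2].
rewrite (lin_cov hu2 _ _ (g := fun i => \sum_(j <- index_enum 'I_T) Gm k j * (sigma2 * Om j i))).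
- have Lu := diag_unit hlam.
  have OmpT : Omp^T = Omp.
    by rewrite /Omp !trmx_mul trmxK trmx_inv tr_diag_mx mulmxA.
  have hFF : forall B : 'M[R]_(M, T), F^T *m (F *m B) = B.
    by move=> B; rewrite mulmxA hF mul1mx.
  have OOO : Omp *m (Om *m Omp) = Omp.
    rewrite /Omp hOmF -!mulmxA !hFF.
    by rewrite (mulmxA (invmx (diag_mx lam))) mulVmx // mul1mx.
  clearbody Omp.
  have OOOB : forall n (B : 'M[R]_(n, T)), B *m Omp *m Om *m Omp = B *m Omp.
    by move=> n B; rewrite -!mulmxA OOO.
  have ST : S^T = S by rewrite /S /Cp !trmx_mul !trmxK OmpT !mulmxA.
  have iST : iS^T = iS by rewrite /iS trmx_inv ST.
  have GtOG : Gt *m Om *m Gt^T = S.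
    by rewrite /Gt !trmx_mul !trmxK OmpT !mulmxA OOOB /S /Cp !mulmxA.
  clearbody Gt.
  have MI : Gm *m Om *m Gm^T = N *m iS *m N^T.
    have -> : Gm *m Om *m Gm^T = N *m iS *m (Gt *m Om *m Gt^T) *m iS^T *m N^T.
      by rewrite /Gm !trmx_mul !mulmxA.
    by rewrite GtOG iST -(mulmxA N iS S) iSS mulmx1.
  clearbody Gm; congr EFin; rewrite -MI mxE.
  under [Z in _ = _ * Z]eq_bigr => j _ do rewrite !mxE.
  rewrite mulr_sumr; apply: eq_bigr => i _.
  rewrite mulr_sumr mulr_suml mulr_sumr; apply: eq_bigr => j _.
  ring.
- exact: lin_L2.
- move=> i; rewrite covarianceC (lin_cov hu2 _ _ (g := fun j => sigma2 * Om j i)) //.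
Qed.
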